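(* Let $(X,d)$ be a metric space, $\lambda\ge0$, $\ell:X\to[0,+\infty)$ lower semicontinuous with $\inf_X\ell=0$, and let $u:X\to\mathbb{R}$ satisfy $\inf_Xu=0$. Then for every $x\in X$, \[T^\infty u(x)=\sup\{v(x): v \text{ is a subsolution of } (\mathcal{G}_\lambda) \text{ and } v\le u\}.\] In particular, if $u$ is a supersolution of $(\mathcal{G}_\lambda)$, then $T^\infty u(x)=\sup\{v(x): v\text{ is a solution of }(\mathcal{G}_\lambda)\text{ and }v\le u\}$ for all $x\in X$.
   Context: Global slope: $G[u](x)=\sup_{y\neq x}\frac{(u(x)-u(y))_+}{d(x,y)}$ if $u(x)<+\infty$, $G[u](x)=+\infty$ otherwise. For $(\mathcal{G}_\lambda)$: a subsolution is $u:X\to\mathbb{R}\cup\{+\infty\}$ with $\inf_Xu=0$ and $\lambda u+G[u]\le\ell$ on $X$; a supersolution is a lower semicontinuous $v$ with $\inf_Xv=0$ and $\lambda v+G[v]\ge\ell$ on $X$; a solution is a lower semicontinuous function that is both. For $u:X\to[0,+\infty]$, $Tu(x)=\inf_{y\in X}\frac{u(y)+\ell(x)d(x,y)}{1+\lambda d(x,y)}$, and $T^\infty u(x)=\lim_{n\to\infty}T^nu(x)$ (a nonincreasing limit). *)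

(* Defs.v *)
From HB Require Import structures.
From mathcomp Require Import all_boot all_order all_algebra.
From mathcomp Require Import all_classical all_reals all_analysis.
Set Implicit Arguments. Unset Strict Implicit. Unset Printing Implicit Defensive.
Import Order.TTheory GRing.Theory Num.Theory.
Local Open Scope classical_set_scope.
Local Open Scope ring_scope.

Section Defs.
Context {R : realType} {X : Type}.

Definition is_metric (d : X -> X -> R) : Prop :=
  [/\ (forall x y, 0 <= d x y),
      (forall x y, d x y = 0 <-> x = y),
      (forall x y, d x y = d y x) &
      (forall x y z, d x z <= d x y + d y z)].

Definition lsc (d : X -> X -> R) (f : X -> \bar R) : Prop :=
  forall x (a : \bar R), (a < f x)%E ->
    exists2 delta : R, 0 < delta & forall y, d x y < delta -> (a < f y)%E.

Definition einf (f : X -> \bar R) : \bar R := ereal_inf (range f).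

Definition gslope (d : X -> X -> R) (u : X -> \bar R) (x : X) : \bar R :=
  if u x == +oo%E then +oo%E
  else ereal_sup ([set 0%E] `|`
         [set (maxe (u x - u y) 0 * ((d x y)^-1)%:E)%E | y in [set y | y <> x]]).

Definition subsolution (d : X -> X -> R) (lam : R) (l : X -> R)
    (u : X -> \bar R) : Prop :=
  einf u = 0%E /\ forall x, (lam%:E * u x + gslope d u x <= (l x)%:E)%E.

Definition supersolution (d : X -> X -> R) (lam : R) (l : X -> R)
    (v : X -> \bar R) : Prop :=
  [/\ lsc d v, einf v = 0%E & forall x, ((l x)%:E <= lam%:E * v x + gslope d v x)%E].

Definition solution (d : X -> X -> R) (lam : R) (l : X -> R)
    (v : X -> \bar R) : Prop :=
  subsolution d lam l v /\ supersolution d lam l v.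

Definition Top (d : X -> X -> R) (lam : R) (l : X -> R)
    (u : X -> \bar R) (x : X) : \bar R :=
  ereal_inf [set ((u y + (l x * d x y)%:E) * ((1 + lam * d x y)^-1)%:E)%E
             | y in [set: X]].

Definition Tinf (d : X -> X -> R) (lam : R) (l : X -> R)
    (u : X -> \bar R) (x : X) : \bar R :=
  limn (fun n => iter n (Top d lam l) u x).

End Defs.

(* Main.v *)
Require Import Defs.
From HB Require Import structures.
From mathcomp Require Import all_boot all_order all_algebra.
From mathcomp Require Import all_classical all_reals all_analysis.
From mathcomp Require Import ring lra.
Set Implicit Arguments. Unset Strict Implicit. Unset Printing Implicit Defensive.
Import Order.TTheory GRing.Theory Num.Theory.
Local Open Scope classical_set_scope.
Local Open Scope ring_scope.

Lemma einf_fin (R : realType) (I : Type) (F : I -> R) (i0 : I) :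
  (forall i, 0 <= F i) ->
  exists t : R, ereal_inf [set (F i)%:E | i in [set: I]] = t%:E /\ 0 <= t /\
    (forall i, t <= F i) /\ (forall b, (forall i, b <= F i) -> b <= t).
Proof.
move=> F0; set S := [set _ | _ in _].
have h0 : (0 <= ereal_inf S)%E.
  by apply: le_ereal_inf_tmp => _ [i _ <-]; rewrite lee_fin.
have h1 : (ereal_inf S <= (F i0)%:E)%E by apply: ereal_inf_lbound; exists i0.
have : ereal_inf S \is a fin_num by rewrite ge0_fin_numE // (le_lt_trans h1) ?ltry.
move/fineK => e; exists (fine (ereal_inf S)); split => //.
split; first by rewrite -lee_fin e.
split.
- by move=> i; rewrite -lee_fin e; apply: ereal_inf_lbound; exists i.
- by move=> b hb; rewrite -lee_fin e; apply: le_ereal_inf_tmp => _ [i _ <-]; rewrite lee_fin.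
Qed.

Lemma gslopeE (R : realType) (X : Type) (d : X -> X -> R) (V : X -> R) x :
  gslope d (fun y => (V y)%:E) x = ereal_sup ([set 0%E] `|`
    [set ((Num.max (V x - V y) 0) * (d x y)^-1)%:E | y in [set y | y <> x]]).
Proof.
rewrite /gslope /=; congr (ereal_sup (_ `|` _)); apply: eq_imagel => y _.
by rewrite -EFinB -EFin_max -EFinM.
Qed.

Lemma TopE (R : realType) (X : Type) (d : X -> X -> R) lam l (v : X -> R) x :
  Top d lam l (fun y => (v y)%:E) x =
  ereal_inf [set ((v y + l x * d x y) / (1 + lam * d x y))%:E | y in [set: X]].
Proof.
by rewrite /Top; congr ereal_inf; apply: eq_imagel => y _; rewrite -EFinD -EFinM.
Qed.

Definition SubR (R : realType) (X : Type) (d : X -> X -> R) lam (l : X -> R)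
  (V : X -> R) :=
  [/\ (forall x, 0 <= V x), (forall x, lam * V x <= l x) &
      (forall x y, (1 + lam * d x y) * V x <= V y + l x * d x y)].

Lemma metric_dxx (R : realType) (X : Type) (d : X -> X -> R) x :
  is_metric d -> d x x = 0.
Proof. by case=> _ h _ _; apply/h. Qed.

Lemma metric_pos (R : realType) (X : Type) (d : X -> X -> R) x y :
  is_metric d -> y <> x -> 0 < d x y.
Proof.
case=> h0 h _ _ yx; rewrite lt_neqAle h0 andbT; apply/eqP => /esym /h.
by move=> e; apply: yx; rewrite e.
Qed.

Lemma sub_of_real (R : realType) (X : Type) (d : X -> X -> R) lam l V :
  is_metric d -> 0 <= lam -> SubR d lam l V ->
  einf (fun y => (V y)%:E) = 0%E -> subsolution d lam l (fun y => (V y)%:E).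
Proof.
move=> hm hlam [V0 Vl Vp] hinf; split => // x; rewrite gslopeE.
have : (ereal_sup ([set 0%E] `|`
    [set ((Num.max (V x - V y) 0) * (d x y)^-1)%:E | y in [set y | y <> x]])
    <= (l x - lam * V x)%:E)%E.
  apply: ge_ereal_sup => _ [->|[y /= yx <-]].
    by rewrite lee_fin subr_ge0.
  have dp := metric_pos hm yx.
  rewrite lee_fin ler_pdivrMr // ge_max; apply/andP; split.
    by have := Vp x y; nra.
  by have := Vl x; nra.
move=> h; apply: le_trans (leeD2l _ h) _.
by rewrite -EFinM -EFinD addrC subrK.
Qed.

Lemma real_of_sub (R : realType) (X : Type) (d : X -> X -> R) lam l v :
  is_metric d -> 0 <= lam -> subsolution d lam l v ->
  exists V : X -> R, v = (fun y => (V y)%:E) /\ SubR d lam l V /\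
    einf (fun y => (V y)%:E) = 0%E.
Proof.
move=> hm hlam [hinf hs].
have v0 : forall x, (0 <= v x)%E.
  by move=> x; rewrite -hinf; apply: ereal_inf_lbound; exists x.
have vfin : forall x, v x \is a fin_num.
  move=> x; rewrite ge0_fin_numE // ltNge leye_eq; apply/negP => /eqP vx.
  have := hs x; rewrite /gslope vx eqxx addey.
    by rewrite leye_eq.
  by rewrite gt_eqF // (lt_le_trans _ (mule_ge0 _ _)) ?ltNye ?lee_fin.
have ev : v = fun y => (fine (v y))%:E by apply: funext => y; rewrite fineK.
exists (fun y => fine (v y)); rewrite -ev; split => //; split => //.
move: ev; set V := fun y => fine (v y); move=> ev.
split.
- by move=> x; rewrite -lee_fin /V fineK.
- move=> x; have := hs x; rewrite ev gslopeE => h; rewrite -lee_fin.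
  apply: le_trans h; rewrite EFinM; apply: leeDl.
  by apply: ereal_sup_ubound; left.
- move=> x y; case: (pselect (y = x)) => [->|yx].
    by rewrite metric_dxx // !mulr0 !addr0 mul1r.
  have dp := metric_pos hm yx.
  have := hs x; rewrite ev gslopeE => h.
  have h2 : (((lam * V x) + (Num.max (V x - V y) 0) * (d x y)^-1)%:E <= (l x)%:E)%E.
    apply: le_trans h; rewrite EFinD EFinM; apply: leeD2l.
    by apply: ereal_sup_ubound; right; exists y.
  rewrite lee_fin in h2.
  set e := (Num.max (V x - V y) 0) * (d x y)^-1 in h2.
  have He : e * d x y = Num.max (V x - V y) 0 by rewrite /e divfK // gt_eqF.
  have hm1 : V x - V y <= Num.max (V x - V y) 0 by rewrite le_max lexx.
  nra.
Qed.

Lemma einf_le (R : realType) (X : Type) (f g : X -> \bar R) :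
  (forall x, (f x <= g x)%E) -> (einf f <= einf g)%E.
Proof.
move=> fg; apply: le_ereal_inf_tmp => _ [x _ <-].
by apply: le_trans (fg x); apply: ereal_inf_lbound; exists x.
Qed.

Lemma metric_ge0 (R : realType) (X : Type) (d : X -> X -> R) x y :
  is_metric d -> 0 <= d x y.
Proof. by case=> h _ _ _. Qed.

Lemma TR_props (R : realType) (X : Type) (d : X -> X -> R) lam l (v : X -> R) x :
  is_metric d -> 0 <= lam -> (forall x, 0 <= l x) -> (forall y, 0 <= v y) ->
  let t := fine (Top d lam l (fun y => (v y)%:E) x) in
  [/\ Top d lam l (fun y => (v y)%:E) x = t%:E, 0 <= t, t <= v x,
      (forall y, t <= (v y + l x * d x y) / (1 + lam * d x y)) &
      (forall b, (forall y, b <= (v y + l x * d x y) / (1 + lam * d x y)) -> b <= t)].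
Proof.
move=> hm hlam l0 v0 t.
have [s [e [s0 [slb sglb]]]] := einf_fin x
  (F := fun y => (v y + l x * d x y) / (1 + lam * d x y))
  (fun y => divr_ge0 (addr_ge0 (v0 y) (mulr_ge0 (l0 x) (metric_ge0 x y hm)))
     (addr_ge0 ler01 (mulr_ge0 hlam (metric_ge0 x y hm)))).
have et : t = s by rewrite /t TopE e.
rewrite /t TopE e /=; split => //.
by have := slb x; rewrite metric_dxx // !mulr0 !addr0 divr1.
Qed.

Lemma W_props (R : realType) (X : Type) (d : X -> X -> R) lam l (u : X -> R) :
  is_metric d -> 0 <= lam -> (forall x, 0 <= l x) ->
  einf (fun x => (u x)%:E) = 0%E ->
  exists W : X -> R,
    [/\ (forall x, Tinf d lam l (fun y => (u y)%:E) x = (W x)%:E),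
        SubR d lam l W, einf (fun x => (W x)%:E) = 0%E,
        (forall x, W x <= u x) &
        (forall V, SubR d lam l V -> (forall x, V x <= u x) -> forall x, V x <= W x)].
Proof.
move=> hm hlam l0 infu.
have u0 : forall x, 0 <= u x.
  move=> x; have : (einf (fun x => (u x)%:E) <= (u x)%:E)%E.
    by apply: ereal_inf_lbound; exists x.
  by rewrite infu lee_fin.
pose TR (v : X -> R) x := fine (Top d lam l (fun y => (v y)%:E) x).
pose Un n := iter n TR u.
have Un0 : forall n y, 0 <= Un n y.
  elim => [|n IH] y /=; first exact: u0.
  by have [] := TR_props y hm hlam l0 IH.
have UnS : forall n, Un n.+1 = TR (Un n) by [].
have Une : forall n, iter n (Top d lam l) (fun y => (u y)%:E) = (fun y => (Un n y)%:E).
  elim => [|n IH] //=; rewrite IH; apply: funext => y.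
  by have [] := TR_props y hm hlam l0 (Un0 n).
have Udec : forall n y, Un n.+1 y <= Un n y.
  by move=> n y; rewrite UnS; have [] := TR_props y hm hlam l0 (Un0 n).
have Ustep : forall n x y, Un n.+1 x <= (Un n y + l x * d x y) / (1 + lam * d x y).
  by move=> n x y; rewrite UnS; have [] := TR_props x hm hlam l0 (Un0 n).
have Uglb : forall n x b, (forall y, b <= (Un n y + l x * d x y) / (1 + lam * d x y)) ->
    b <= Un n.+1 x.
  by move=> n x b; rewrite UnS; have [_ _ _ _] := TR_props x hm hlam l0 (Un0 n); apply.
have Tlim : forall x, Tinf d lam l (fun y => (u y)%:E) x =
    ereal_inf (range (fun n => (Un n x)%:E)).
  move=> x; rewrite /Tinf.
  have -> : (fun n => iter n (Top d lam l) (fun y => (u y)%:E) x) =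
      (fun n => (Un n x)%:E) by apply: funext => n; rewrite Une.
  apply: cvg_lim => //; apply: ereal_nonincreasing_cvgn.
  by apply/nonincreasing_seqP => n; rewrite lee_fin.
have Wex : forall x, exists w, [/\ Tinf d lam l (fun y => (u y)%:E) x = w%:E, 0 <= w,
    (forall n, w <= Un n x) & (forall b, (forall n, b <= Un n x) -> b <= w)].
  move=> x; have [w [e [w0 [wlb wglb]]]] := einf_fin 0%N (F := fun n => Un n x)
    (fun n => Un0 n x).
  by exists w; split => //; rewrite Tlim e.
pose W x := fine (Tinf d lam l (fun y => (u y)%:E) x).
have Wp : forall x, [/\ Tinf d lam l (fun y => (u y)%:E) x = (W x)%:E, 0 <= W x,
    (forall n, W x <= Un n x) & (forall b, (forall n, b <= Un n x) -> b <= W x)].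
  by move=> x; have [w [e w0 wlb wglb]] := Wex x; rewrite /W e.
have Wu : forall x, W x <= u x by move=> x; have [_ _ h _] := Wp x; exact: (h 0%N).
have W0 : forall x, 0 <= W x by move=> x; have [] := Wp x.
have infW : einf (fun x => (W x)%:E) = 0%E.
  apply: le_anti; apply/andP; split.
    by rewrite -infu; apply: einf_le => x; rewrite lee_fin.
  by apply: le_ereal_inf_tmp => _ [x _ <-]; rewrite lee_fin.
have Wprod : forall x y, (1 + lam * d x y) * W x <= W y + l x * d x y.
  move=> x y.
  have dp : 0 < 1 + lam * d x y.
    by apply: (lt_le_trans ltr01); rewrite lerDl mulr_ge0 // metric_ge0.
  suff : (1 + lam * d x y) * W x - l x * d x y <= W y by rewrite lerBlDr.
  have [_ _ _ hg] := Wp y; apply: hg => n.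
  have [_ _ hl _] := Wp x.
  have := le_trans (hl n.+1) (Ustep n x y).
  by rewrite ler_pdivlMr // lerBlDr mulrC.
have Wlam : forall x, lam * W x <= l x.
  move=> x; apply/ler_addgt0Pr => e e0.
  have [lam0|lamp] := eqVneq lam 0.
    by rewrite lam0 mul0r addr_ge0 // ltW.
  have lp : 0 < lam by rewrite lt_neqAle eq_sym lamp.
  have : (einf (fun x => (W x)%:E) < (e / lam)%:E)%E by rewrite infW lte_fin divr_gt0.
  case/ereal_inf_lt => _ [y _ <-]; rewrite lte_fin => hy.
  have hy' : lam * W y < e by rewrite -ltr_pdivlMl // mulrC.
  have hp := Wprod x y; have hd := metric_ge0 x y hm; have hl := l0 x.
  rewrite leNgt; apply/negP => hc.
  have h1 := ler_wpM2l (ltW lp) hp.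
  have h2 : 0 <= lam * d x y * (lam * W x - (l x + e)).
    by apply: mulr_ge0; [apply: mulr_ge0 => //; exact: ltW|rewrite subr_ge0 ltW].
  nra.
have Wmax : forall V, SubR d lam l V -> (forall x, V x <= u x) -> forall x, V x <= W x.
  move=> V [V0 Vl Vp] Vu x; have [_ _ _ hg] := Wp x; apply: hg => n.
  elim: n x => [|n IH] x; first exact: Vu.
  apply: Uglb => y.
  have dp : 0 < 1 + lam * d x y.
    by apply: (lt_le_trans ltr01); rewrite lerDl mulr_ge0 // metric_ge0.
  rewrite ler_pdivlMr // mulrC; apply: le_trans (Vp x y) _.
  by rewrite lerD2r IH.
exists W; split => //; first by move=> x; have [] := Wp x.

Qed.

Lemma lsc_sub (R : realType) (X : Type) (d : X -> X -> R) lam l V :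
  is_metric d -> 0 <= lam -> SubR d lam l V -> lsc d (fun y => (V y)%:E).
Proof.
move=> hm hlam [V0 Vl Vp] x [a| |] ha.
- rewrite lte_fin in ha.
  have lp : 0 < l x + 1.
    by apply: (lt_le_trans ltr01); rewrite lerDr (le_trans (mulr_ge0 hlam (V0 x))).
  exists ((V x - a) / (l x + 1)); first by rewrite divr_gt0 // subr_gt0.
  move=> y; rewrite ltr_pdivlMr // lte_fin => hy.
  have h0 : 0 <= lam * d x y * V x by rewrite !mulr_ge0 // metric_ge0.
  have := Vp x y; have := metric_ge0 x y hm; nra.
- by rewrite ltNge leey in ha.
- by exists 1 => // y _; exact: ltNyr.
Qed.

Lemma perron (R : realType) (X : Type) (d : X -> X -> R) lam l (u W : X -> R) :
  is_metric d -> 0 <= lam -> (forall x, 0 <= l x) ->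
  lsc d (fun x => (l x)%:E) -> lsc d (fun x => (u x)%:E) ->
  einf (fun x => (u x)%:E) = 0%E -> SubR d lam l W -> (forall x, W x <= u x) ->
  (forall V, SubR d lam l V -> (forall x, V x <= u x) -> forall x, V x <= W x) ->
  forall x0, W x0 < u x0 ->
  ((l x0)%:E <= lam%:E * (W x0)%:E + gslope d (fun y => (W y)%:E) x0)%E.
Proof.
move=> hm hlam l0 lscl lscu infu [W0 Wl Wp] Wu Wmax x0 hx0.
rewrite gslopeE; set S := (X in ereal_sup X); set s := ereal_sup S.
rewrite leNgt; apply/negP => hc.
have s0 : (0 <= s)%E by apply: ereal_sup_ubound; left.
have sfin : s \is a fin_num.
  rewrite ge0_fin_numE // ltNge leye_eq; apply/negP => /eqP sinf.
  by move: hc; rewrite sinf addey // -EFinM ltNge leey.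
have sg : s = (fine s)%:E by rewrite fineK.
move: sg s0 hc; set g := fine s => sg s0 hc.
rewrite sg -EFinM -EFinD lte_fin in hc; rewrite sg lee_fin in s0.
have Gb : forall y, W x0 - W y <= g * d x0 y.
  move=> y; case: (pselect (y = x0)) => [->|yx].
    by rewrite metric_dxx // mulr0 subrr.
  have : (((Num.max (W x0 - W y) 0) * (d x0 y)^-1)%:E <= s)%E.
    by apply: ereal_sup_ubound; right; exists y.
  rewrite sg lee_fin ler_pdivrMr ?(metric_pos hm yx) // => h; apply: le_trans h.
  by rewrite le_max lexx.
move: hc Gb hx0; set a := W x0; set L := l x0 => hc Gb hx0.
pose eta := (L - lam * a - g) / 3.
have eta0 : 0 < eta by rewrite divr_gt0 //; lra.
have etaE : L = lam * a + g + 3 * eta by rewrite /eta; field.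
pose c := g + eta.
pose m := (u x0 - a) / 2.
have m0 : 0 < m by rewrite divr_gt0 // subr_gt0.
have [|rho rho0 hrho] := lscu x0 ((a + m)%:E); first by rewrite lte_fin /m; lra.
have [|rho' rho'0 hrho'] := lscl x0 ((L - eta)%:E); first by rewrite /= lte_fin -/L; lra.
pose del := Num.min (m / 2) (Num.min (eta * rho / 2)
  (Num.min (eta * rho' / 2) (eta / (lam + 1)))).
have lam1 : 0 < lam + 1 by lra.
have del0 : 0 < del.
  have h1 : 0 < m / 2 by rewrite divr_gt0.
  have h2 : 0 < eta * rho / 2 by apply: divr_gt0 => //; apply: mulr_gt0.
  have h3 : 0 < eta * rho' / 2 by apply: divr_gt0 => //; apply: mulr_gt0.
  have h4 : 0 < eta / (lam + 1) by rewrite divr_gt0.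
  by rewrite /del !lt_min h1 h2 h3 h4.
have delm : del <= m / 2 by rewrite /del !ge_min lexx.
have delr : del <= eta * rho / 2 by rewrite /del !ge_min lexx orbT.
have delr' : del <= eta * rho' / 2 by rewrite /del !ge_min lexx !orbT.
have dell : lam * del <= eta.
  have : del <= eta / (lam + 1) by rewrite /del !ge_min lexx !orbT.
  rewrite ler_pdivlMr // => h; nra.
pose phi z := a + del - c * d x0 z.
pose W' z := Num.max (W z) (phi z).
have active : forall z, W z < phi z -> d x0 z < rho /\ d x0 z < rho'.
  move=> z hz; have := Gb z; have := metric_ge0 x0 z hm.
  move: hz; rewrite /phi /c => hz hd hg.
  have : eta * d x0 z < del by nra.
  move=> h; split; nra.
have W'u : forall z, W' z <= u z.
  move=> z; rewrite /W' ge_max Wu /=.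
  have [hz|hz] := ltP (W z) (phi z); last by apply: le_trans hz (Wu z).
  have [h1 _] := active z hz.
  have := hrho z h1; rewrite lte_fin => h2.
  have := metric_ge0 x0 z hm; rewrite /phi /c => h3.
  have : 0 <= c * d x0 z by apply: mulr_ge0 => //; rewrite /c; lra.
  rewrite /c; lra.
have SW' : SubR d lam l W'.
  split.
  - by move=> z; rewrite /W' le_max W0.
  - move=> z; rewrite /W'.
    have [hz|hz] := leP (phi z) (W z); first exact: Wl.
    have [_ h1] := active z hz.
    have := hrho' z h1; rewrite lte_fin => h2.
    have := metric_ge0 x0 z hm => h3.
    have h4 : 0 <= lam * (c * d x0 z) by rewrite !mulr_ge0 //; rewrite /c; lra.
    rewrite /phi; nra.
  - move=> z y; rewrite {1}/W'.
    have [hz|hz] := leP (phi z) (W z).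
      by apply: le_trans (Wp z y) _; rewrite lerD2r /W' le_max lexx.
    have [_ h1] := active z hz.
    have := hrho' z h1; rewrite lte_fin => h2.
    have h3 := metric_ge0 x0 z hm.
    have h5 := metric_ge0 z y hm.
    have htri : d x0 y <= d x0 z + d z y by case: hm => _ _ _; apply.
    have hpy : phi y <= W' y by rewrite /W' le_max lexx orbT.
    have hc0 : 0 <= c by rewrite /c; lra.
    have hpz : phi z <= a + del by rewrite /phi; have := mulr_ge0 hc0 h3; lra.
    have hcl : c + lam * phi z <= l z.
      have : lam * phi z <= lam * (a + del) by rewrite ler_wpM2l.
      rewrite /c; nra.
    have := ler_wpM2l h5 hcl.
    have : phi z <= phi y + c * d z y.
      have := ler_wpM2l hc0 htri; rewrite /phi mulrDr; lra.
    move: hpy; set pz := phi z; set py := phi y; set D := d z y; set w := W' y.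
    move=> hpy h6 h7; nra.
have infW' : einf (fun x => (W' x)%:E) = 0%E.
  apply: le_anti; apply/andP; split.
    by rewrite -infu; apply: einf_le => x; rewrite lee_fin.
  by apply: le_ereal_inf_tmp => _ [x _ <-]; rewrite lee_fin; case: SW'.
have := Wmax W' SW' W'u x0.
rewrite /W' ge_max => /andP [_].
rewrite /phi metric_dxx // mulr0 subr0 -/a; lra.
Qed.

Theorem theorem4p5 (R : realType) (X : Type) (d : X -> X -> R)
  (lam : R) (l : X -> R) (u : X -> R) :
  is_metric d -> 0 <= lam ->
  (forall x, 0 <= l x) -> lsc d (fun x => (l x)%:E) ->
  einf (fun x => (l x)%:E) = 0%E ->
  einf (fun x => (u x)%:E) = 0%E ->
  (forall x, Tinf d lam l (fun y => (u y)%:E) x =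
     ereal_sup [set v x | v in [set v : X -> \bar R |
                  subsolution d lam l v /\ forall y, (v y <= (u y)%:E)%E]])
  /\
  (supersolution d lam l (fun y => (u y)%:E) ->
   forall x, Tinf d lam l (fun y => (u y)%:E) x =
     ereal_sup [set v x | v in [set v : X -> \bar R |
                  solution d lam l v /\ forall y, (v y <= (u y)%:E)%E]]).
Proof.
move=> hm hlam l0 lscl infl infu.
have [W [TW SW infW Wu Wmax]] := W_props hm hlam l0 infu.
have subW : subsolution d lam l (fun y => (W y)%:E) := sub_of_real hm hlam SW infW.
have ubW : forall (P : (X -> \bar R) -> Prop) x,
    (forall v, P v -> subsolution d lam l v) ->
    (ereal_sup [set v x | v in [set v : X -> \bar R |
                  P v /\ forall y, (v y <= (u y)%:E)%E]] <= (W x)%:E)%E.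
  move=> P x PS; apply: ge_ereal_sup => _ [v [Pv vu] <-].
  have [V [ev [SV _]]] := real_of_sub hm hlam (PS v Pv).
  rewrite ev lee_fin; apply: Wmax SV _ x => y.
  by have := vu y; rewrite ev lee_fin.
split.
  move=> x; rewrite TW; apply: le_anti; apply/andP; split; last exact: ubW.
  apply: ereal_sup_ubound; exists (fun y => (W y)%:E) => //; split => // y.
move=> supu x; rewrite TW; apply: le_anti; apply/andP; split; last first.
  by apply: ubW => v [].
apply: ereal_sup_ubound; exists (fun y => (W y)%:E) => //; split; last first.
  by move=> y; rewrite /= lee_fin.
split => //; split => //; first exact: lsc_sub hm hlam SW.
move=> y; have [lu _ su] := supu.
have [h|h] := ltP (W y) (u y).
  exact: perron hm hlam l0 lscl lu infu SW Wu Wmax y h.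
have e : W y = u y by apply: le_anti; rewrite h Wu.
move: (su y) => /le_trans; apply; rewrite -e; apply: leeD2l; rewrite !gslopeE.
apply: ge_ereal_sup => _ [->|[z zy <-]].
  by apply: ereal_sup_ubound; left.
apply: (@le_trans _ _ ((Num.max (W y - W z) 0 * (d y z)^-1)%:E)).
  by rewrite lee_fin -e ler_wpM2r ?invr_ge0 ?metric_ge0 //;
    rewrite ge_max; apply/andP; split; rewrite le_max; last (by rewrite lexx orbT);
    rewrite lerD2l lerN2 Wu.
by apply: ereal_sup_ubound; right; exists z.
Qed.
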